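(* Let $P$ be a program of the imperative language described in the context, and suppose $\vdash P : M$ is derivable in the deterministic calculus, with $M$ an $n\times n$ matrix with coefficients in $\{0,1,2\}^p\to\mathrm{mwp}^{\infty}$. If there exists $\vec a\in\{0,1,2\}^p$ such that no coefficient of $M[\vec a]$ equals $\infty$, then every value computed by $P$ is bounded by a polynomial in the inputs (the initial values of the variables of $P$).
   Context: Language. Variables range over $X_1,\dots,X_n$ (a fixed finite set; these are the program's inputs), and $b$ ranges over boolean expressions (unspecified). Expressions: $e ::= X \mid X - Y \mid X + Y \mid X * Y$. Commands: $C ::= X = e \mid \texttt{if } b \texttt{ then } C \texttt{ else } C \mid \texttt{while } b \texttt{ do } \{C\} \mid \texttt{loop } X \{C\} \mid C;C$, where $\texttt{loop } X\{C\}$ executes $C$ $X$ times. A program is a sequential composition of commands. Semi-rings. $\mathrm{mwp}^\infty$ has carrier $\{0,m,w,p,\infty\}$ with $0<m<w<p<\infty$, addition $\max$, and $\alpha\times\beta=0$ if $\alpha,\beta\neq\infty$ and one of them is $0$, $\max(\alpha,\beta)$ otherwise. $\{0,1,2\}^p\to\mathrm{mwp}^\infty$ is the semi-ring of functions with pointwise operations (constants identified with constant functions). Matrices are $n\times n$ with componentwise $\oplus$, usual product $\otimes$, unit $\mathbf{1}$ ($m$ on the diagonal, $0$ elsewhere), closure $M^*=\mathbf{1}\oplus M\oplus M^2\oplus\cdots$. $M[\vec a]$ is $M$ with every coefficient evaluated at $\vec a$. $\delta(i,k)(\vec a)=m$ if $a_k=i$, $0$ otherwise. $\{^{\alpha}_i\}$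 is the $n$-vector with $\alpha$ in row $i$ and $0$ elsewhere, $\{^\alpha_i,^\beta_j\}=\{^\alpha_i\}\oplus\{^\beta_j\}$, $\mathbf{1}\xleftarrow{j}V$ is the unit matrix with column $j$ replaced by $V$, $\{^\alpha_i\to j\}$ is the matrix with $\alpha$ at $(i,j)$ and $0$ elsewhere. Deterministic calculus $\vdash$: each application of rule E$^A$ receives its own choice index $k\in\{1,\dots,p\}$ ($p$ = number of applications). (E$^A$) for $\star\in\{+,-\}$: $\vdash X_i\star X_j:\delta(0,k)\{^m_i,^p_j\}\oplus\delta(1,k)\{^p_i,^m_j\}\oplus\delta(2,k)\{^w_i,^w_j\}$; (E$^M$) $\vdash X_i*X_j:\{^w_i,^w_j\}$; (E$^S$) $\vdash X_i:\{^m_i\}$; (A) from $\vdash e:V$ infer $\vdash X_j=e:\mathbf{1}\xleftarrow{j}V$; (C) from $\vdash C_1:M_1,\ \vdash C_2:M_2$ infer $\vdash C_1;C_2:M_1\otimes M_2$; (I) same premises, $\vdash\texttt{if } b\texttt{ then } C_1\texttt{ else } C_2:M_1\oplus M_2$; (L$^\infty$) from $\vdash C:M$ infer $\vdash\texttt{loop } X_l\{C\}:M^*\oplus\{^\infty_j\to j\mid M^*_{jj}\neq m\}\oplus\{^p_l\to j\mid\exists i,\ M^*_{ij}=p\}$; (W$^\infty$) from $\vdash C:M$ infer $\vdash\texttt{while } b\texttt{ do }\{C\}:M^*\oplus\{^\infty_j\to j\mid M^*_{jj}\neq m\}\oplus\{^\infty_i\to j\mid M^*_{ij}=p\}$ (conditions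 understood pointwise for each choice assignment). *)

(* Defs.v *)
From Stdlib Require Import ClassicalDescription.
From HB Require Import structures.
From mathcomp Require Import all_boot.

Set Implicit Arguments.
Unset Strict Implicit.
Unset Printing Implicit Defensive.

(* The language.  Variables are X_0 .. X_{n-1} (indices 'I_n); values  *)
(* are natural numbers (subtraction is truncated).  Boolean            *)
(* expressions are left unspecified: any boolean test on the store.    *)

Definition store (n : nat) := 'I_n -> nat.

Inductive expr (n : nat) : Type :=
| EVar of 'I_n
| ESub of 'I_n & 'I_n
| EAdd of 'I_n & 'I_n
| EMul of 'I_n & 'I_n.

Inductive cmd (n : nat) : Type :=
| Assign of 'I_n & expr n
| If of (store n -> bool) & cmd n & cmd n
| While of (store n -> bool) & cmd n
| Loop of 'I_n & cmd n
| Seq of cmd n & cmd n.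

Definition eval_expr n (e : expr n) (s : store n) : nat :=
  match e with
  | EVar i => s i
  | ESub i j => s i - s j
  | EAdd i j => s i + s j
  | EMul i j => s i * s j
  end.

Definition upd n (s : store n) (j : 'I_n) (v : nat) : store n :=
  fun i => if i == j then v else s i.

Inductive exec (n : nat) : cmd n -> store n -> store n -> Prop :=
| ExAssign j e s : exec (Assign j e) s (upd s j (eval_expr e s))
| ExIfT (b : store n -> bool) C1 C2 s s' : b s -> exec C1 s s' -> exec (If b C1 C2) s s'
| ExIfF (b : store n -> bool) C1 C2 s s' : ~~ b s -> exec C2 s s' -> exec (If b C1 C2) s s'
| ExWhileF (b : store n -> bool) C s : ~~ b s -> exec (While b C) s s
| ExWhileT (b : store n -> bool) C s s1 s' : b s -> exec C s s1 -> exec (While b C) s1 s' ->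
    exec (While b C) s s'
| ExLoop l C s s' : execn C (s l) s s' -> exec (Loop l C) s s'
| ExSeq C1 C2 s s1 s' : exec C1 s s1 -> exec C2 s1 s' -> exec (Seq C1 C2) s s'
with execn (n : nat) : cmd n -> nat -> store n -> store n -> Prop :=
| ExN0 C s : execn C 0 s s
| ExNS C k s s1 s' : exec C s s1 -> execn C k s1 s' -> execn C k.+1 s s'.

Inductive polyE (n : nat) : Type :=
| PConst of nat
| PVar of 'I_n
| PAdd of polyE n & polyE n
| PMul of polyE n & polyE n.

Fixpoint peval n (q : polyE n) (s : store n) : nat :=
  match q with
  | PConst c => c
  | PVar i => s i
  | PAdd q1 q2 => peval q1 s + peval q2 s
  | PMul q1 q2 => peval q1 s * peval q2 s
  end.

Inductive mwp : Type := M0 | Mm | Mw | Mp | Minf.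

Definition mrank (a : mwp) : nat :=
  match a with M0 => 0 | Mm => 1 | Mw => 2 | Mp => 3 | Minf => 4 end.

Definition mwp_eqb (a b : mwp) : bool := mrank a == mrank b.

Definition madd (a b : mwp) : mwp := if mrank a <= mrank b then b else a.

Definition mmul (a b : mwp) : mwp :=
  if ~~ mwp_eqb a Minf && ~~ mwp_eqb b Minf && (mwp_eqb a M0 || mwp_eqb b M0)
  then M0 else madd a b.

(* Supremum (= infinite sum w.r.t. max) of a sequence in the finite chain mwp. *)
Definition supseq (f : nat -> mwp) : mwp :=
  if excluded_middle_informative (exists k, f k = Minf) then Minf else
  if excluded_middle_informative (exists k, f k = Mp) then Mp else
  if excluded_middle_informative (exists k, f k = Mw) then Mw else
  if excluded_middle_informative (exists k, f k = Mm) then Mm else M0.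

Definition choice (p : nat) := 'I_p -> 'I_3.
Definition coef (p : nat) := choice p -> mwp.
Definition cst p (x : mwp) : coef p := fun _ => x.

Definition vect (n p : nat) := 'I_n -> coef p.
Definition mat (n p : nat) := 'I_n -> 'I_n -> coef p.  (* M i j = entry at row i, column j *)

Definition vadd n p (U V : vect n p) : vect n p := fun i a => madd (U i a) (V i a).
Definition madd_mx n p (A B : mat n p) : mat n p := fun i j a => madd (A i j a) (B i j a).
Definition mmul_mx n p (A B : mat n p) : mat n p :=
  fun i j a => foldr madd M0 [seq mmul (A i k a) (B k j a) | k <- enum 'I_n].
Definition unit_mx n p : mat n p := fun i j _ => if i == j then Mm else M0.
Fixpoint mpow n p (A : mat n p) (k : nat) : mat n p :=
  match k with 0 => @unit_mx n p | k'.+1 => mmul_mx (mpow A k') A end.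
Definition star n p (A : mat n p) : mat n p := fun i j a => supseq (fun k => mpow A k i j a).
Definition mx_at n p (A : mat n p) (a : choice p) : 'I_n -> 'I_n -> mwp := fun i j => A i j a.

Definition delta p (i : nat) (k : 'I_p) : coef p := fun a => if (a k : nat) == i then Mm else M0.
Definition vsingle n p (alpha : coef p) (i : 'I_n) : vect n p :=
  fun r => if r == i then alpha else @cst p M0.
Definition cscale n p (c : coef p) (V : vect n p) : vect n p := fun r a => mmul (c a) (V r a).
Definition replace_col n p (j : 'I_n) (V : vect n p) : mat n p :=
  fun i k => if k == j then V i else @unit_mx n p i k.

Definition inf_diag n p (S : mat n p) : mat n p :=
  fun i j a => if (i == j) && ~~ mwp_eqb (S j j a) Mm then Minf else M0.
Definition p_row n p (l : 'I_n) (S : mat n p) : mat n p :=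
  fun r j a => if (r == l) && [exists i, mwp_eqb (S i j a) Mp] then Mp else M0.
Definition inf_p n p (S : mat n p) : mat n p :=
  fun i j a => if mwp_eqb (S i j a) Mp then Minf else M0.

(* The deterministic calculus.  The seq records the choice indices     *)
(* k : 'I_p given to the applications of rule E^A, in order.           *)

Inductive dexpr (n p : nat) : expr n -> seq 'I_p -> vect n p -> Prop :=
| DE_Sub i j (k : 'I_p) :
    dexpr (ESub i j) [:: k]
      (vadd (vadd (cscale (delta 0 k) (vadd (vsingle (@cst p Mm) i) (vsingle (@cst p Mp) j)))
                  (cscale (delta 1 k) (vadd (vsingle (@cst p Mp) i) (vsingle (@cst p Mm) j))))
            (cscale (delta 2 k) (vadd (vsingle (@cst p Mw) i) (vsingle (@cst p Mw) j))))
| DE_Add i j (k : 'I_p) :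
    dexpr (EAdd i j) [:: k]
      (vadd (vadd (cscale (delta 0 k) (vadd (vsingle (@cst p Mm) i) (vsingle (@cst p Mp) j)))
                  (cscale (delta 1 k) (vadd (vsingle (@cst p Mp) i) (vsingle (@cst p Mm) j))))
            (cscale (delta 2 k) (vadd (vsingle (@cst p Mw) i) (vsingle (@cst p Mw) j))))
| DE_Mul i j : dexpr (EMul i j) [::] (vadd (vsingle (@cst p Mw) i) (vsingle (@cst p Mw) j))
| DE_Var i : dexpr (EVar i) [::] (vsingle (@cst p Mm) i).

Inductive dcmd (n p : nat) : cmd n -> seq 'I_p -> mat n p -> Prop :=
| DC_Assign j e ks V : dexpr e ks V -> dcmd (Assign j e) ks (replace_col j V)
| DC_Seq C1 C2 ks1 ks2 M1 M2 : dcmd C1 ks1 M1 -> dcmd C2 ks2 M2 ->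
    dcmd (Seq C1 C2) (ks1 ++ ks2) (mmul_mx M1 M2)
| DC_If (b : store n -> bool) C1 C2 ks1 ks2 M1 M2 : dcmd C1 ks1 M1 -> dcmd C2 ks2 M2 ->
    dcmd (If b C1 C2) (ks1 ++ ks2) (madd_mx M1 M2)
| DC_Loop l C ks M : dcmd C ks M ->
    dcmd (Loop l C) ks (madd_mx (madd_mx (star M) (inf_diag (star M))) (p_row l (star M)))
| DC_While (b : store n -> bool) C ks M : dcmd C ks M ->
    dcmd (While b C) ks (madd_mx (madd_mx (star M) (inf_diag (star M))) (inf_p (star M))).

(* |- P : M, where each application of E^A receives its own index in
   {1..p} (here 'I_p) and p is the number of such applications. *)
Definition derivable n p (P : cmd n) (M : mat n p) : Prop :=
  exists ks : seq 'I_p, [/\ dcmd P ks M, uniq ks & size ks = p].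

(* Main.v *)
Require Import Defs.
From mathcomp Require Import all_boot.
From mathcomp Require Import zify.
From Stdlib Require Import ClassicalDescription.
Set Implicit Arguments.
Unset Strict Implicit.
Unset Printing Implicit Defensive.

Lemma mrank_le4 x : mrank x <= 4. Proof. by case: x. Qed.
Lemma rank_madd x y : mrank (madd x y) = maxn (mrank x) (mrank y).
Proof. by case: x; case: y. Qed.
Lemma rank_mmul_nz x y : mrank x != 0 -> mrank y != 0 ->
  mrank (mmul x y) = maxn (mrank x) (mrank y).
Proof. by case: x; case: y. Qed.
Lemma rank_mmul_inf x y : (mrank x = 4) \/ (mrank y = 4) -> mrank (mmul x y) = 4.
Proof. by case: x; case: y => //=; case. Qed.
Lemma rank_mmul_m x : mrank (mmul Mm x) = mrank x.
Proof. by case: x. Qed.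
Lemma rank_mmul_0 x : mrank x <= 3 -> mrank (mmul M0 x) = 0.
Proof. by case: x. Qed.
Lemma rank4 x : mrank x = 4 -> x = Minf.
Proof. by case: x. Qed.

Lemma foldr_ge (T : eqType) (f : T -> mwp) (s : seq T) h : h \in s ->
  mrank (f h) <= mrank (foldr madd M0 [seq f k | k <- s]).
Proof.
elim: s => //= x s IH; rewrite in_cons rank_madd => /orP[/eqP->|/IH]; lia.
Qed.

Lemma mmul_mx_ge n p (A B : mat n p) a i h j :
  mrank (mmul (A i h a) (B h j a)) <= mrank (mmul_mx A B i j a).
Proof. rewrite /mmul_mx. apply: (foldr_ge (fun k => mmul (A i k a) (B k j a))). by rewrite mem_enum. Qed.

Ltac solve_ex k := match goal with H : ~ (exists _, _) |- _ => by apply: H; exists k end.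

Lemma supseq_ge f k : mrank (f k) <= mrank (supseq f).
Proof.
rewrite /supseq.
destruct (excluded_middle_informative (exists k, f k = Minf)) as [hh1|h1]; first exact: mrank_le4.
destruct (excluded_middle_informative (exists k, f k = Mp)) as [hh2|h2].
  case E: (f k) => //; exfalso; solve_ex k.
destruct (excluded_middle_informative (exists k, f k = Mw)) as [hh3|h3].
  case E: (f k) => //; exfalso; solve_ex k.
destruct (excluded_middle_informative (exists k, f k = Mm)) as [hh4|h4].
  case E: (f k) => //; exfalso; solve_ex k.
case E: (f k) => //; exfalso; solve_ex k.
Qed.

Lemma supseq_att f : exists k, supseq f = f k.
Proof.
rewrite /supseq.
destruct (excluded_middle_informative (exists k, f k = Minf)) as [[k hk]|h1]; first by exists k; rewrite hk.
destruct (excluded_middle_informative (exists k, f k = Mp)) as [[k hk]|h2]; first by exists k; rewrite hk.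
destruct (excluded_middle_informative (exists k, f k = Mw)) as [[k hk]|h3]; first by exists k; rewrite hk.
destruct (excluded_middle_informative (exists k, f k = Mm)) as [[k hk]|h4]; first by exists k; rewrite hk.
exists 0; case E: (f 0) => //; exfalso; solve_ex 0.
Qed.

Definition PB (f : nat -> nat) :=
  [/\ forall x y, x <= y -> f x <= f y, f 0 = 0 & exists c d, forall x, f x <= c * x.+1 ^ d].

Lemma expn_mono a b e : a <= b -> a ^ e <= b ^ e.
Proof. move=> ab; elim: e => // e IH; rewrite !expnS; exact: leq_mul. Qed.

Lemma PB_mono f x y : PB f -> x <= y -> f x <= f y.
Proof. by case=> h _ _; apply: h. Qed.
Lemma PB0 f : PB f -> f 0 = 0.
Proof. by case. Qed.

Lemma PB_ext f g : (forall x, f x = g x) -> PB f -> PB g.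
Proof.
move=> e [h1 h2 [c [d h3]]]; split.
- by move=> x y xy; rewrite -!e; apply: h1.
- by rewrite -e.
- by exists c, d => x; rewrite -e.
Qed.

Lemma PB_id : PB id.
Proof. split => // ; exists 1, 1 => x /=; rewrite expn1 mul1n; exact: leqnSn. Qed.

Lemma PB_add f g : PB f -> PB g -> PB (fun x => f x + g x).
Proof.
move=> [f1 f2 [c1 [d1 f3]]] [g1 g2 [c2 [d2 g3]]]; split.
- by move=> x y xy; apply: leq_add; [apply: f1|apply: g1].
- by rewrite f2 g2.
- exists (c1 + c2), (d1 + d2) => x; rewrite mulnDl; apply: leq_add.
  + apply: leq_trans (f3 x) _; apply: leq_mul => //; apply: leq_pexp2l => //; exact: leq_addr.
  + apply: leq_trans (g3 x) _; apply: leq_mul => //; apply: leq_pexp2l => //; exact: leq_addl.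
Qed.

Lemma PB_mul f g : PB f -> PB g -> PB (fun x => f x * g x).
Proof.
move=> [f1 f2 [c1 [d1 f3]]] [g1 g2 [c2 [d2 g3]]]; split.
- by move=> x y xy; apply: leq_mul; [apply: f1|apply: g1].
- by rewrite f2.
- exists (c1 * c2), (d1 + d2) => x; rewrite expnD.
  have -> : c1 * c2 * (x.+1 ^ d1 * x.+1 ^ d2) = (c1 * x.+1 ^ d1) * (c2 * x.+1 ^ d2) by lia.
  exact: leq_mul.
Qed.

Lemma PB_comp f g : PB f -> PB g -> PB (fun x => f (g x)).
Proof.
move=> [f1 f2 [c1 [d1 f3]]] [g1 g2 [c2 [d2 g3]]]; split.
- by move=> x y xy; apply: f1; apply: g1.
- by rewrite g2 f2.
- exists (c1 * c2.+1 ^ d1), (d2 * d1) => x.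
  apply: leq_trans (f3 _) _.
  rewrite -mulnA leq_mul2l; apply/orP; right.
  rewrite expnM -expnMn; apply: expn_mono.
  have h : 0 < x.+1 ^ d2 by rewrite expn_gt0.
  have := g3 x; nia.
Qed.

Lemma PB_max f x y : PB f -> f (maxn x y) <= f x + f y.
Proof. move=> h; case: (leqP x y) => xy. 
- exact: leq_addl.
- exact: leq_addr.
Qed.

Lemma PB_sum f x y : PB f -> f (x + y) <= f (2 * x) + f (2 * y).
Proof.
move=> h; apply: leq_trans (PB_max _ _ h).
apply: PB_mono => //; lia.
Qed.

Definition mx n (P : pred 'I_n) (s : store n) := \max_(i | P i) s i.

Lemma mx_ge n (P : pred 'I_n) s i : P i -> s i <= mx P s.
Proof. exact: leq_bigmax_cond. Qed.

Lemma mx_le n (P : pred 'I_n) s m : (forall i, P i -> s i <= m) -> mx P s <= m.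
Proof. by move=> h; apply/bigmax_leqP. Qed.

Lemma mx_sub n (P Q : pred 'I_n) s : (forall i, P i -> Q i) -> mx P s <= mx Q s.
Proof. by move=> h; apply: mx_le => i /h; apply: mx_ge. Qed.

Lemma mx_union n (P Q1 Q2 : pred 'I_n) s : (forall i, P i -> Q1 i || Q2 i) ->
  mx P s <= maxn (mx Q1 s) (mx Q2 s).
Proof.
move=> h; apply: mx_le => i /h /orP[] /(mx_ge s) hi; lia.
Qed.

Lemma mx_pred0 n s : mx (@pred0 'I_n) s = 0.
Proof. by rewrite /mx big_pred0. Qed.

Lemma mx_empty n (P : pred 'I_n) s : (forall i, ~~ P i) -> mx P s = 0.
Proof. by move=> h; apply/eqP; rewrite -leqn0; apply: mx_le => i; rewrite (negbTE (h i)). Qed.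

Definition rmat n := 'I_n -> 'I_n -> nat.

Definition shp n (R : rmat n) (g : nat -> nat) (s : store n) (j : 'I_n) :=
  maxn (mx (fun i => R i j == 1) s) (g (mx (fun i => R i j == 2) s))
  + g (mx (fun i => R i j == 3) s).

Definition GG (g : nat -> nat) x := x + 2 * g x.

Lemma PB_GG g : PB g -> PB (GG g).
Proof.
move=> h; apply: PB_add; first exact: PB_id.
apply: (PB_ext (f := fun x => g x + g x)) (PB_add h h) => x; lia.
Qed.

Lemma reclass n (A B C A' B' C' : pred 'I_n) g s : PB g ->
  (forall i, A i -> [|| A' i, B' i | C' i]) ->
  (forall i, B i -> B' i || C' i) ->
  (forall i, C i -> C' i) ->
  maxn (mx A s) (g (mx B s)) + g (mx C s) <=
  maxn (mx A' s) (GG g (mx B' s)) + GG g (mx C' s).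
Proof.
move=> hg hA hB hC.
have h1 : mx A s <= maxn (mx A' s) (maxn (mx B' s) (mx C' s)).
  apply: mx_le => i /hA /orP[/(mx_ge s)|/orP[]/(mx_ge s)] ?; lia.
have h2 : mx B s <= maxn (mx B' s) (mx C' s) by apply: mx_union.
have h3 : mx C s <= mx C' s by apply: mx_sub.
have h4 := PB_max (mx B' s) (mx C' s) hg.
have h5 : g (mx B s) <= g (maxn (mx B' s) (mx C' s)) by apply: PB_mono.
have h6 : g (mx C s) <= g (mx C' s) by apply: PB_mono.
rewrite /GG; lia.
Qed.

Definition Sound n (C : cmd n) (R : rmat n) :=
  exists g, PB g /\ forall s s', exec C s s' -> forall j, s' j <= shp R g s j.

Lemma shape_mono_g n (R : rmat n) g g' s j : (forall x, g x <= g' x) ->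
  shp R g s j <= shp R g' s j.
Proof. move=> h; rewrite /shp; have := h (mx (fun i => R i j == 2) s); have := h (mx (fun i => R i j == 3) s); lia. Qed.

Lemma Sound_mono n (C : cmd n) (R R' : rmat n) : Sound C R ->
  (forall i j, R i j <= R' i j <= 3) -> Sound C R'.
Proof.
move=> [g [hg hs]] hR; exists (GG g); split; first exact: PB_GG.
move=> s s' ex j; apply: leq_trans (hs _ _ ex j) _.
apply: reclass => // i /eqP e; have := hR i j; rewrite e; lia.
Qed.

Lemma r123 x : 1 <= x <= 3 -> [|| x == 1, x == 2 | x == 3].
Proof. by case: x => [|[|[|[|]]]]. Qed.
Lemma r23 x : 2 <= x <= 3 -> (x == 2) || (x == 3).
Proof. by case: x => [|[|[|[|]]]]. Qed.
Lemma r3 x : 3 <= x <= 3 -> x == 3.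
Proof. by case: x => [|[|[|[|]]]]. Qed.

Lemma Sound_seq n (C1 C2 : cmd n) (R1 R2 R : rmat n) : Sound C1 R1 -> Sound C2 R2 ->
  (forall i h j, R1 i h != 0 -> R2 h j != 0 -> maxn (R1 i h) (R2 h j) <= R i j) ->
  (forall i j, R i j <= 3) -> Sound (Seq C1 C2) R.
Proof.
move=> [g1 [hg1 hs1]] [g2 [hg2 hs2]] hR h3.
pose G1 := GG g1.
have hG1 : PB G1 by apply: PB_GG.
exists (fun x => G1 x + 2 * g2 (2 * G1 x)); split.
  apply: PB_add => //.
  apply: (PB_ext (f := fun x => g2 (2 * G1 x) + g2 (2 * G1 x))); first by move=> x; lia.
  have hh : PB (fun x => 2 * G1 x).
    by apply: (PB_ext (f := fun x => G1 x + G1 x)); [move=> x; lia | apply: PB_add].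
  by apply: PB_add; apply: PB_comp.
move=> s s' ex j; inversion ex as [| | | | | |C1' C2' s0 s1 s2 E1 E2]; subst.
have e2 := hs2 _ _ E2 j.
set mA := mx (fun i => R i j == 1) s.
set xB := mx (fun i => R i j == 2) s.
set xC := mx (fun i => R i j == 3) s.
have hA : forall h, R2 h j == 1 -> s1 h <= maxn mA (G1 xB) + G1 xC.
  move=> h /eqP e; apply: leq_trans (hs1 _ _ E1 h) _; apply: reclass => // i /eqP e1;
  have := hR i h j; have := h3 i j; rewrite e e1 => ? hh; [apply: r123|apply: r23|apply: r3]; 
  have := hh isT isT; lia.
have hB : forall h, R2 h j == 2 -> s1 h <= G1 xB + G1 xC.
  move=> h /eqP e; apply: leq_trans (hs1 _ _ E1 h) _.
  have := @reclass _ _ _ _ pred0 (fun i => R i j == 2) (fun i => R i j == 3) g1 s hg1.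
  rewrite mx_pred0 max0n; apply => // i /eqP e1;
  have := hR i h j; have := h3 i j; rewrite e e1 => ? hh; [apply: r23|apply: r23|apply: r3];
  have := hh isT isT; lia.
have hC : forall h, R2 h j == 3 -> s1 h <= G1 xC.
  move=> h /eqP e; apply: leq_trans (hs1 _ _ E1 h) _.
  have := @reclass _ _ _ _ pred0 pred0 (fun i => R i j == 3) g1 s hg1.
  rewrite mx_pred0 (PB0 (PB_GG hg1)) max0n add0n; apply => // i /eqP e1;
  have := hR i h j; have := h3 i j; rewrite e e1 => ? hh; apply: r3;
  have := hh isT isT; lia.
have hA' := mx_le hA.
have hB' : g2 (mx (fun h => R2 h j == 2) s1) <= g2 (2 * G1 xB) + g2 (2 * G1 xC).
  apply: leq_trans (PB_sum _ _ hg2); apply: PB_mono => //; exact: mx_le.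
have hC' : g2 (mx (fun h => R2 h j == 3) s1) <= g2 (2 * G1 xC).
  apply: PB_mono => //; apply: mx_le => h /hC hh; lia.
apply: (leq_trans e2); rewrite /shp -/mA -/xB -/xC.
lia.
Qed.

Lemma Sound_if n b (C1 C2 : cmd n) (R1 R2 : rmat n) : Sound C1 R1 -> Sound C2 R2 ->
  (forall i j, maxn (R1 i j) (R2 i j) <= 3) ->
  Sound (If b C1 C2) (fun i j => maxn (R1 i j) (R2 i j)).
Proof.
move=> h1 h2 h3.
have [g1 [hg1 hs1]] : Sound C1 (fun i j => maxn (R1 i j) (R2 i j)).
  by apply: Sound_mono h1 _ => i j; have := h3 i j; lia.
have [g2 [hg2 hs2]] : Sound C2 (fun i j => maxn (R1 i j) (R2 i j)).
  by apply: Sound_mono h2 _ => i j; have := h3 i j; lia.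
exists (fun x => g1 x + g2 x); split; first exact: PB_add.
move=> s s' ex j; inversion ex; subst.
- apply: leq_trans (hs1 _ _ H5 j) _; apply: shape_mono_g => x; exact: leq_addr.
- apply: leq_trans (hs2 _ _ H5 j) _; apply: shape_mono_g => x; exact: leq_addl.
Qed.

Lemma shape_col n (R R' : rmat n) g s j : (forall i, R i j = R' i j) ->
  shp R g s j = shp R' g s j.
Proof.
move=> h; rewrite /shp /mx.
by rewrite !(eq_bigl (fun i => R' i j == _) _ (fun i => congr1 (fun x => x == _) (h i))).
Qed.

Lemma Sound_assign n (j : 'I_n) e (R : rmat n) g : PB g ->
  (forall k, k != j -> R k k = 1) ->
  (forall s, eval_expr e s <= shp R g s j) -> Sound (Assign j e) R.
Proof.
move=> hg hk he; exists g; split => // s s' ex k; inversion ex; subst.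
rewrite /upd; case: eqP => [->|/eqP nk]; first exact: he.
apply: leq_trans (leq_addr _ _); apply: leq_trans (leq_maxl _ _); apply: mx_ge.
by rewrite hk.
Qed.

Fixpoint Ff (g : nat -> nat) (l x : nat) : nat :=
  match l with 0 => x | l'.+1 => Ff g l' x + g (2 * Ff g l' x) end.
Fixpoint Pf (g : nat -> nat) (l Y : nat) : nat :=
  match l with 0 => 0
  | l'.+1 => Pf g l' Y + 2 * Ff g l'.+1 Y + 2 * g (2 * (Ff g l' Y + Y * Pf g l' Y)) end.
Definition Rf g l Y := Ff g l Y + Y * Pf g l Y.

Lemma PB_2 f : PB f -> PB (fun x => 2 * f x).
Proof. by move=> h; apply: (PB_ext (f := fun x => f x + f x)); [move=> x; lia | apply: PB_add]. Qed.

Lemma Ff_PB g l : PB g -> PB (Ff g l).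
Proof.
move=> hg; elim: l => [|l IH] /=; first exact: PB_id.
apply: (PB_ext (f := fun x => Ff g l x + g (2 * Ff g l x))) => // .
by apply: PB_add => //; apply: PB_comp => //; apply: PB_2.
Qed.

Lemma PB_mulid f : PB f -> PB (fun x => x * f x).
Proof. move=> h; exact: (PB_mul PB_id h). Qed.

Lemma Pf_PB g l : PB g -> PB (Pf g l).
Proof.
move=> hg; elim: l => [|l IH] /=.
  by split => //; exists 0, 0.
apply: (PB_ext (f := fun Y => Pf g l Y + 2 * Ff g l.+1 Y + 2 * g (2 * (Ff g l Y + Y * Pf g l Y)))) => //.
apply: PB_add; first apply: PB_add => //; first exact: (PB_2 (Ff_PB l.+1 hg)).
apply: PB_2; apply: PB_comp => //; apply: PB_2; apply: PB_add; first exact: Ff_PB.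
exact: PB_mulid.
Qed.

Lemma Rf_PB g l : PB g -> PB (Rf g l).
Proof. move=> hg; apply: PB_add; [exact: Ff_PB | exact: PB_mulid (Pf_PB l hg)]. Qed.

Lemma Ff_ge g l x : x <= Ff g l x.
Proof. elim: l => //= l IH; lia. Qed.

Lemma Ff_monol g l l' x : l <= l' -> Ff g l x <= Ff g l' x.
Proof.
move/subnKC <-; elim: (l' - l) => [|d IH]; first by rewrite addn0.
rewrite addnS /=; lia.
Qed.

Lemma Pf_monol g l l' x : l <= l' -> Pf g l x <= Pf g l' x.
Proof.
move/subnKC <-; elim: (l' - l) => [|d IH]; first by rewrite addn0.
rewrite addnS /=; lia.
Qed.

Lemma Ff_mono g l l' x y : PB g -> l <= l' -> x <= y -> Ff g l x <= Ff g l' y.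
Proof. move=> hg hl hx; apply: leq_trans (Ff_monol _ _ hl); exact: PB_mono (Ff_PB l hg) hx. Qed.

Lemma Pf_mono g l l' x y : PB g -> l <= l' -> x <= y -> Pf g l x <= Pf g l' y.
Proof. move=> hg hl hx; apply: leq_trans (Pf_monol _ _ hl); exact: PB_mono (Pf_PB l hg) hx. Qed.

Lemma execn_last n (C : cmd n) k s t : execn C k.+1 s t ->
  exists t0, execn C k s t0 /\ exec C t0 t.
Proof.
elim: k s t => [|k IH] s t h.
  inversion h as [|C' k' s0 s1 s2 E1 E2]; subst.
  inversion E2; subst. by exists s; split => //; constructor.
inversion h as [|C' k' s0 s1 s2 E1 E2]; subst.
have [t0 [h1 h2]] := IH _ _ E2.
exists t0; split => //; exact: ExNS E1 h1.
Qed.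

Section Iter.
Variables (n : nat) (C : cmd n) (E N : rmat n) (g : nat -> nat).
Hypothesis hg : PB g.
Hypothesis hbody : forall t t', exec C t t' -> forall j, t' j <= shp E g t j.
Hypothesis hN3 : forall i j, N i j <= 3.
Hypothesis hdiag : forall j, N j j = 1.
Hypothesis hN2 : forall i h j, N i h != 0 -> E h j != 0 -> maxn (N i h) (E h j) <= N i j.

Definition L j := #|[pred i | N i j != 0]|.

Lemma L_le h j : E h j != 0 -> L h <= L j.
Proof.
move=> hE; apply: subset_leq_card; apply/subsetP => i; rewrite !inE => hi.
have := hN2 hi hE; lia.
Qed.

Lemma L_lt h j : 2 <= E h j -> L h < L j.
Proof.
move=> hE; have hE0 : E h j != 0 by lia.
apply: proper_card; apply/properP; split.
  apply/subsetP => i; rewrite !inE => hi; have := @hN2 i h j hi hE0; lia.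
exists j; rewrite !inE ?hdiag //.
apply/negP => hj; have := hN2 hj hE0; have := hdiag j; lia.
Qed.

Lemma L_pos j : 0 < L j.
Proof. apply/card_gt0P; exists j; by rewrite inE hdiag. Qed.

Lemma L_n j : L j <= n.
Proof. rewrite -[n]card_ord; exact: max_card. Qed.

Definition mA j s := mx (fun i => N i j == 1) s.
Definition xB j s := mx (fun i => N i j == 2) s.
Definition xC j s := mx (fun i => N i j == 3) s.

Definition Inv K k s (t : store n) := forall j,
  t j <= maxn (mA j s) (Ff g (L j) (xB j s)) + k * Pf g (L j) (xC j s * K.+1).

Lemma Inv0 K s : Inv K 0 s s.
Proof.
move=> j; rewrite mul0n addn0; apply: leq_trans (leq_maxl _ _); apply: mx_ge.
by rewrite hdiag.
Qed.

Lemma kY K k x l : k <= K -> k * Pf g l (x * K.+1) <= (x * K.+1) * Pf g l (x * K.+1).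
Proof.
move=> hk; case: (posnP x) => [->|xp]; first by rewrite mul0n (PB0 (Pf_PB l hg)) !muln0.
apply: leq_mul => //; nia.
Qed.

Lemma Inv_step K k s t t' : k < K -> Inv K k s t -> exec C t t' -> Inv K k.+1 s t'.
Proof.
move=> hk hI ex j.
have [l' Hl] : exists l', L j = l'.+1 by exists (L j).-1; rewrite prednK // L_pos.
set Y := xC j s * K.+1.
have hCY : xC j s <= Y by rewrite /Y; apply: leq_pmulr.
have claim1 : forall h, E h j == 1 ->
    t h <= maxn (mA j s) (Ff g (L j) (xB j s)) + 2 * Ff g (L j) Y + k * Pf g (L j) Y.
  move=> h /eqP e.
  have h1 : mA h s <= maxn (mA j s) (maxn (xB j s) (xC j s)).
    apply: mx_le => i /eqP ei; have := @hN2 i h j; rewrite e ei => hh.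
    have := hh isT isT; have := hN3 i j => ? ?.
    case/or3P: (@r123 (N i j) ltac:(lia)) => hh'; [have := @mx_ge _ (fun i => N i j == 1) s i hh' | have := @mx_ge _ (fun i => N i j == 2) s i hh' | have := @mx_ge _ (fun i => N i j == 3) s i hh']; rewrite /mA /xB /xC; lia.
  have h2 : xB h s <= maxn (xB j s) (xC j s).
    apply: mx_union => i /eqP ei; have := @hN2 i h j; rewrite e ei => hh.
    have := hh isT isT; have := hN3 i j => ? ?; apply: r23; lia.
  have h3 : xC h s <= xC j s.
    apply: mx_sub => i /eqP ei; have := @hN2 i h j; rewrite e ei => hh.
    have := hh isT isT; have := hN3 i j => ? ?; apply: r3; lia.
  have hL : L h <= L j by apply: L_le; rewrite e.
  have h4 : Ff g (L h) (xB h s) <= Ff g (L j) (xB j s) + Ff g (L j) Y.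
    apply: leq_trans (Ff_mono hg hL h2) _; apply: leq_trans (PB_max _ _ (Ff_PB _ hg)) _.
    apply: leq_add => //; exact: PB_mono (Ff_PB _ hg) hCY.
  have h5 : k * Pf g (L h) (xC h s * K.+1) <= k * Pf g (L j) Y.
    apply: leq_mul => //; apply: Pf_mono => //; exact: leq_mul.
  have h6 := Ff_ge g (L j) (xB j s).
  have h7 : xC j s <= Ff g (L j) Y by apply: leq_trans hCY (Ff_ge _ _ _).
  apply: leq_trans (hI h) _.
  move: h4 h5 h6 h7 h1; generalize (k * Pf g (L h) (xC h s * K.+1)) (k * Pf g (L j) Y); lia.
have claim2 : forall h, E h j == 2 -> t h <= Ff g l' (xB j s) + Rf g l' Y.
  move=> h /eqP e.
  have h1 : mA h s <= maxn (xB j s) (xC j s).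
    apply: mx_union => i /eqP ei; have := @hN2 i h j; rewrite e ei => hh.
    have := hh isT isT; have := hN3 i j => ? ?; apply: r23; lia.
  have h2 : xB h s <= maxn (xB j s) (xC j s).
    apply: mx_union => i /eqP ei; have := @hN2 i h j; rewrite e ei => hh.
    have := hh isT isT; have := hN3 i j => ? ?; apply: r23; lia.
  have h3 : xC h s <= xC j s.
    apply: mx_sub => i /eqP ei; have := @hN2 i h j; rewrite e ei => hh.
    have := hh isT isT; have := hN3 i j => ? ?; apply: r3; lia.
  have hL : L h <= l' by have := @L_lt h j; rewrite e Hl => /(_ isT); lia.
  have h4 : Ff g (L h) (xB h s) <= Ff g l' (xB j s) + Ff g l' Y.
    apply: leq_trans (Ff_mono hg hL h2) _; apply: leq_trans (PB_max _ _ (Ff_PB _ hg)) _.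
    apply: leq_add => //; exact: PB_mono (Ff_PB _ hg) hCY.
  have h5 : k * Pf g (L h) (xC h s * K.+1) <= Y * Pf g l' Y.
    apply: leq_trans (kY _ _ (ltnW hk)); apply: leq_mul => //; apply: Pf_mono => //; exact: leq_mul.
  have h6 := Ff_ge g l' (xB j s).
  have h7 : xC j s <= Ff g l' Y by apply: leq_trans hCY (Ff_ge _ _ _).
  apply: leq_trans (hI h) _; rewrite /Rf.
  move: h4 h5 h6 h7 h1; generalize (k * Pf g (L h) (xC h s * K.+1)) (Y * Pf g l' Y); lia.
have claim3 : forall h, E h j == 3 -> t h <= Rf g l' Y.
  move=> h /eqP e.
  have h1 : mA h s <= xC j s.
    apply: mx_sub => i /eqP ei; have := @hN2 i h j; rewrite e ei => hh.
    have := hh isT isT; have := hN3 i j => ? ?; apply: r3; lia.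
  have h2 : xB h s <= xC j s.
    apply: mx_sub => i /eqP ei; have := @hN2 i h j; rewrite e ei => hh.
    have := hh isT isT; have := hN3 i j => ? ?; apply: r3; lia.
  have h3 : xC h s <= xC j s.
    apply: mx_sub => i /eqP ei; have := @hN2 i h j; rewrite e ei => hh.
    have := hh isT isT; have := hN3 i j => ? ?; apply: r3; lia.
  have hL : L h <= l' by have := @L_lt h j; rewrite e Hl => /(_ isT); lia.
  have h4 : Ff g (L h) (xB h s) <= Ff g l' Y.
    apply: Ff_mono => //; lia.
  have h5 : k * Pf g (L h) (xC h s * K.+1) <= Y * Pf g l' Y.
    apply: leq_trans (kY _ _ (ltnW hk)); apply: leq_mul => //; apply: Pf_mono => //; exact: leq_mul.
  have h7 : xC j s <= Ff g l' Y by apply: leq_trans hCY (Ff_ge _ _ _).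
  apply: leq_trans (hI h) _; rewrite /Rf.
  move: h4 h5 h7 h1; generalize (k * Pf g (L h) (xC h s * K.+1)) (Y * Pf g l' Y); lia.
have hA := mx_le claim1.
have hB : g (mx (fun h => E h j == 2) t) <= g (2 * Ff g l' (xB j s)) + g (2 * Rf g l' Y).
  apply: leq_trans (PB_sum _ _ hg); apply: PB_mono => //; exact: mx_le.
have hC : g (mx (fun h => E h j == 3) t) <= g (2 * Rf g l' Y).
  apply: PB_mono => //; apply: mx_le => h /claim3; lia.
have eF : Ff g (L j) (xB j s) = Ff g l' (xB j s) + g (2 * Ff g l' (xB j s)) by rewrite Hl.
have eP : Pf g (L j) Y = Pf g l' Y + 2 * Ff g (L j) Y + 2 * g (2 * Rf g l' Y) by rewrite Hl.
apply: leq_trans (hbody ex j) _; rewrite /shp mulSn.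
move: hA hB hC eF eP; rewrite -/(mA j s).
generalize (k * Pf g (L j) Y); lia.
Qed.

Lemma Inv_iter K k s t : k <= K -> execn C k s t -> Inv K k s t.
Proof.
elim: k t => [|k IH] t hk ex.
  inversion ex; subst; exact: Inv0.
have [t0 [h1 h2]] := execn_last ex.
apply: Inv_step h2 => //; apply: IH h1; lia.
Qed.

Lemma iter_bound K k s t : k <= K -> execn C k s t -> forall j,
  t j <= maxn (mA j s) (Ff g n (xB j s)) + k * Pf g n (xC j s * K.+1).
Proof.
move=> hk ex j; apply: leq_trans (Inv_iter hk ex j) _.
apply: leq_add; first by rewrite geq_max leq_maxl /=; apply: leq_trans (leq_maxr _ _); apply: Ff_mono => //; exact: L_n.
apply: leq_mul => //; apply: Pf_mono => //; exact: L_n.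
Qed.
End Iter.

Definition gE (x : nat) := x * x + 2 * x.
Lemma PB_gE : PB gE.
Proof. apply: PB_add; [exact: (PB_mul PB_id PB_id) | exact: (PB_2 PB_id)]. Qed.

Definition VA n p (i i' : 'I_n) (k : 'I_p) : vect n p :=
      (vadd (vadd (cscale (delta 0 k) (vadd (vsingle (@cst p Mm) i) (vsingle (@cst p Mp) i')))
                  (cscale (delta 1 k) (vadd (vsingle (@cst p Mp) i) (vsingle (@cst p Mm) i'))))
            (cscale (delta 2 k) (vadd (vsingle (@cst p Mw) i) (vsingle (@cst p Mw) i')))).

Lemma addsub_bound n p (i i' : 'I_n) (k : 'I_p) a s j :
  s i + s i' <= shp (fun r _ => mrank (VA i i' k r a)) gE s j.
Proof.
rewrite /shp.
set R := fun r => mrank (VA i i' k r a).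
set mA := mx _ s; set xB := mx _ s; set xC := mx _ s.
have gB : 2 * xB <= gE xB by rewrite /gE; lia.
have gC : 2 * xC <= gE xC by rewrite /gE; lia.
have geA : forall r, R r == 1 -> s r <= mA by move=> r hr; apply: (@mx_ge _ (fun r => R r == 1)).
have geB : forall r, R r == 2 -> s r <= xB by move=> r hr; apply: (@mx_ge _ (fun r => R r == 2)).
have geC : forall r, R r == 3 -> s r <= xC by move=> r hr; apply: (@mx_ge _ (fun r => R r == 3)).
have := ltn_ord (a k); case E: (nat_of_ord (a k)) => [|[|[|//]]] _.
- have hR : forall r, R r = maxn (if r == i then 1 else 0) (if r == i' then 3 else 0).
    move=> r; rewrite /R /VA /vadd /cscale /delta E /vsingle /cst.
    by case: (r == i); case: (r == i').
  have h1 : s i <= maxn mA xC.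
    have := hR i; rewrite eqxx; case: (i == i') => /eqP e.
    - have := geC i e; lia.
    - have := geA i e; lia.
  have h2 : s i' <= xC by apply: geC; rewrite hR eqxx; case: (i' == i).
  lia.
- have hR : forall r, R r = maxn (if r == i then 3 else 0) (if r == i' then 1 else 0).
    move=> r; rewrite /R /VA /vadd /cscale /delta E /vsingle /cst.
    by case: (r == i); case: (r == i').
  have h1 : s i' <= maxn mA xC.
    have := hR i'; rewrite eqxx; case: (i' == i) => /eqP e.
    - have := geC i' e; lia.
    - have := geA i' e; lia.
  have h2 : s i <= xC by apply: geC; rewrite hR eqxx; case: (i == i').
  lia.
- have hR : forall r, R r = maxn (if r == i then 2 else 0) (if r == i' then 2 else 0).
    move=> r; rewrite /R /VA /vadd /cscale /delta E /vsingle /cst.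
    by case: (r == i); case: (r == i').
  have h1 : s i <= xB by apply: geB; rewrite hR eqxx; case: (i == i').
  have h2 : s i' <= xB by apply: geB; rewrite hR eqxx; case: (i' == i).
  lia.
Qed.

Lemma dexpr_bound n p e ks (V : vect n p) a s j : dexpr e ks V ->
  eval_expr e s <= shp (fun r _ => mrank (V r a)) gE s j.
Proof.
case => [i i' k|i i' k|i i'|i] /=.
- apply: leq_trans (addsub_bound i i' k a s j); exact: leq_trans (leq_subr _ _) (leq_addr _ _).
- exact: (addsub_bound i i' k a s j).
- rewrite /shp.
  have h : forall r, r = i \/ r = i' -> s r <= mx (fun r0 => mrank (vadd (vsingle (@cst p Mw) i) (vsingle (@cst p Mw) i') r0 a) == 2) s.
    move=> r hr; apply: mx_ge; rewrite /vadd /vsingle /cst.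
    by case: hr => ->; rewrite eqxx; [case: (i == i') | case: (i' == i)].
  have h1 := h i (or_introl erefl); have h2 := h i' (or_intror erefl).
  rewrite /gE. 
  move: h1 h2; set X := mx _ s => h1 h2.
  have : s i * s i' <= X * X by apply: leq_mul.
  lia.
- rewrite /shp; apply: leq_trans (leq_addr _ _); apply: leq_trans (leq_maxl _ _).
  by apply: mx_ge; rewrite /vsingle /cst eqxx.
Qed.

Definition rk n p (M : mat n p) a : rmat n := fun i j => mrank (M i j a).

Lemma exec_while n b (C : cmd n) s s' : exec (While b C) s s' -> exists k, execn C k s s'.
Proof.
move=> h; remember (While b C) as w eqn:ew; induction h; try discriminate.
- by exists 0; constructor.
- case: ew => ??; subst. have [k hk] := IHh2 erefl.
  by exists k.+1; apply: ExNS hk.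
Qed.

Lemma mpow1_ge n p (M : mat n p) a i j : mrank (M i j a) <= mrank (star M i j a).
Proof.
apply: leq_trans (supseq_ge _ 1).
have := @mmul_mx_ge n p (mpow M 0) M a i i j.
by rewrite /= /unit_mx eqxx rank_mmul_m.
Qed.

Lemma star_N2 n p (M : mat n p) a i h j : mrank (star M i h a) != 0 -> mrank (M h j a) != 0 ->
  maxn (mrank (star M i h a)) (mrank (M h j a)) <= mrank (star M i j a).
Proof.
rewrite /star; have [k ->] := supseq_att (fun k => mpow M k i h a) => h1 h2.
apply: leq_trans (supseq_ge _ k.+1).
rewrite -rank_mmul_nz //; exact: (@mmul_mx_ge n p (mpow M k) M a i h j).
Qed.

Lemma mx_pos_ex n (P : pred 'I_n) s : 0 < mx P s -> exists i, P i.
Proof.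
move=> h; case: (pickP P) => [i hi|h0]; first by exists i.
by rewrite mx_empty ?ltnn in h => // i; rewrite h0.
Qed.

Lemma main n p (C : cmd n) ks (M : mat n p) a : dcmd C ks M ->
  (forall i j, mrank (M i j a) <= 3) -> Sound C (rk M a).
Proof.
elim => {C ks M}.
-
  move=> j e ks V hV _; apply: (Sound_assign PB_gE).
  + by move=> k nk; rewrite /rk /replace_col (negbTE nk) /unit_mx eqxx.
  + move=> s; rewrite (shape_col _ _ (R' := fun r _ => mrank (V r a))).
      exact: dexpr_bound hV.
    by move=> i; rewrite /rk /replace_col eqxx.
-
  move=> C1 C2 ks1 ks2 M1 M2 _ IH1 _ IH2 h.
  have h1 : forall i j, mrank (M1 i j a) <= 3.
    move=> i h'; case: (leqP (mrank (M1 i h' a)) 3) => // hh.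
    have := @mmul_mx_ge _ _ M1 M2 a i h' h'; rewrite rank_mmul_inf; last by left; have := mrank_le4 (M1 i h' a); lia.
    have := h i h'; lia.
  have h2 : forall i j, mrank (M2 i j a) <= 3.
    move=> h' j; case: (leqP (mrank (M2 h' j a)) 3) => // hh.
    have := @mmul_mx_ge _ _ M1 M2 a h' h' j; rewrite rank_mmul_inf; last by right; have := mrank_le4 (M2 h' j a); lia.
    have := h h' j; lia.
  apply: Sound_seq (IH1 h1) (IH2 h2) _ h => i h' j n1 n2.
  rewrite /rk -rank_mmul_nz //; exact: mmul_mx_ge.
-
  move=> b C1 C2 ks1 ks2 M1 M2 _ IH1 _ IH2 h.
  have hm : forall i j, mrank (madd_mx M1 M2 i j a) = maxn (mrank (M1 i j a)) (mrank (M2 i j a)).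
    by move=> i j; rewrite /madd_mx rank_madd.
  have h1 : forall i j, mrank (M1 i j a) <= 3 by move=> i j; have := h i j; rewrite hm; lia.
  have h2 : forall i j, mrank (M2 i j a) <= 3 by move=> i j; have := h i j; rewrite hm; lia.
  apply: Sound_mono (Sound_if b (IH1 h1) (IH2 h2) _) _.
    by move=> i j; rewrite /rk -hm.
  by move=> i j; rewrite /rk hm leqnn /= -hm.
-
  move=> l C ks M _ IH h.
  set N := star M in h *.
  have hF : forall i j, mrank (madd_mx (madd_mx N (inf_diag N)) (p_row l N) i j a) =
      maxn (maxn (mrank (N i j a)) (mrank (inf_diag N i j a))) (mrank (p_row l N i j a)).
    by move=> i j; rewrite /madd_mx !rank_madd.
  have hN3 : forall i j, mrank (N i j a) <= 3 by move=> i j; have := h i j; rewrite /rk hF; lia.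
  have hdiag : forall j, mrank (N j j a) = 1.
    move=> j; have := h j j; rewrite /rk hF /inf_diag eqxx /=.
    rewrite /mwp_eqb /=; case: (mrank (N j j a) == 1) /eqP => //= _; lia.
  have hM : forall i j, mrank (M i j a) <= 3.
    by move=> i j; apply: leq_trans (hN3 i j); exact: mpow1_ge.
  have [g [hg hbody]] := IH hM.
  pose G x := x + Ff g n x + x * Pf g n (x * x.+1).
  have hG : PB G.
    apply: PB_add; first by apply: PB_add; [exact: PB_id | exact: Ff_PB].
    apply: PB_mulid; apply: PB_comp; first exact: Pf_PB.
    apply: (PB_ext (f := fun x => x * x + x)); first by move=> x; lia.
    by apply: PB_add; [exact: (PB_mul PB_id PB_id) | exact: PB_id].
  exists G; split => // s s' ex j.
  inversion ex as [| | | | |l' C' s0 s1 hn|]; subst.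
  have := @iter_bound n C (rk M a) (rk N a) g hg hbody hN3 hdiag (@star_N2 n p M a) (s l) (s l) s s' (leqnn _) hn j.
  rewrite /mA /xB /xC /shp.
  set R' := rk (madd_mx _ _) a.
  have hRR : forall i, mrank (N i j a) <= R' i j <= 3.
    move=> i; rewrite /R' /rk hF; have := h i j; rewrite /rk hF; lia.
  set mA := mx (fun i => rk N a i j == 1) s; set xB := mx (fun i => rk N a i j == 2) s;
  set xC := mx (fun i => rk N a i j == 3) s.
  set mA' := mx (fun i => R' i j == 1) s; set xB' := mx (fun i => R' i j == 2) s;
  set xC' := mx (fun i => R' i j == 3) s.
  have e1 : mA <= maxn mA' (maxn xB' xC').
    apply: mx_le => i /eqP ei; have := hRR i; rewrite /rk in ei; rewrite ei => hh.
    case/or3P: (r123 hh) => hh'; [have := @mx_ge _ (fun i => R' i j == 1) s i hh' | have := @mx_ge _ (fun i => R' i j == 2) s i hh' | have := @mx_ge _ (fun i => R' i j == 3) s i hh']; rewrite -/mA' -/xB' -/xC'; lia.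
  have e2 : xB <= maxn xB' xC'.
    apply: mx_union => i /eqP ei; have := hRR i; rewrite /rk in ei; rewrite ei => hh; exact: r23.
  have e3 : xC <= xC'.
    apply: mx_sub => i /eqP ei; have := hRR i; rewrite /rk in ei; rewrite ei => hh; exact: r3.
  have e4 : Ff g n xB <= Ff g n xB' + Ff g n xC'.
    apply: leq_trans (PB_max _ _ (Ff_PB n hg)); exact: PB_mono (Ff_PB n hg) e2.
  have e5 : s l * Pf g n (xC * (s l).+1) <= xC' * Pf g n (xC' * xC'.+1).
    case: (posnP xC) => [->|xp]; first by rewrite mul0n (PB0 (Pf_PB n hg)) muln0.
    have [i0 hi0] := mx_pos_ex xp.
    have hl : s l <= xC'.
      have Hex : [exists i, mwp_eqb (N i j a) Mp] by apply/existsP; exists i0.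
      apply: mx_ge; rewrite /R'; have := h l j; rewrite /rk hF /p_row eqxx Hex /=.
      move=> hh; apply/eqP; lia.
    apply: leq_mul => //; apply: Pf_mono => //; apply: leq_mul => //.
  have e6 := Ff_ge g n xB'.
  rewrite /G; move: e1 e2 e3 e4 e5 e6.
  generalize (s l * Pf g n (xC * (s l).+1)) (xC' * Pf g n (xC' * xC'.+1)) (xB' * Pf g n (xB' * xB'.+1)).
  lia.
-
  move=> b C ks M _ IH h.
  set N := star M in h *.
  have hF : forall i j, mrank (madd_mx (madd_mx N (inf_diag N)) (inf_p N) i j a) =
      maxn (maxn (mrank (N i j a)) (mrank (inf_diag N i j a))) (mrank (inf_p N i j a)).
    by move=> i j; rewrite /madd_mx !rank_madd.
  have hN3 : forall i j, mrank (N i j a) <= 3 by move=> i j; have := h i j; rewrite /rk hF; lia.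
  have hdiag : forall j, mrank (N j j a) = 1.
    move=> j; have := h j j; rewrite /rk hF /inf_diag eqxx /=.
    rewrite /mwp_eqb /=; case: (mrank (N j j a) == 1) /eqP => //= _; lia.
  have hnp : forall i j, mrank (N i j a) != 3.
    move=> i j; apply/negP => /eqP e; have := h i j; rewrite /rk hF /inf_p /mwp_eqb e /=; lia.
  have hM : forall i j, mrank (M i j a) <= 3.
    by move=> i j; apply: leq_trans (hN3 i j); exact: mpow1_ge.
  have [g [hg hbody]] := IH hM.
  apply: (@Sound_mono _ _ (rk N a)); last first.
    by move=> i j; rewrite /rk hF; have := h i j; rewrite /rk hF; lia.
  exists (Ff g n); split; first exact: Ff_PB.
  move=> s s' ex j; have [k hk] := exec_while ex.
  have := @iter_bound n C (rk M a) (rk N a) g hg hbody hN3 hdiag (@star_N2 n p M a) k k s s' (leqnn _) hk j.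
  rewrite /xC mx_empty ?mul0n ?(PB0 (Pf_PB n hg)) ?muln0 ?addn0; last by move=> i; rewrite /rk hnp.
  by move=> h1; apply: leq_trans h1 (leq_addr _ _).
Qed.

Fixpoint ppow n (q : polyE n) d : polyE n :=
  match d with 0 => PConst n 1 | d'.+1 => PMul q (ppow q d') end.
Lemma peval_ppow n (q : polyE n) d s : peval (ppow q d) s = peval q s ^ d.
Proof. by elim: d => //= d ->; rewrite expnS. Qed.

Definition qsum n (l : seq 'I_n) : polyE n := foldr (fun i q => PAdd (PVar i) q) (PConst n 0) l.
Lemma qsum_ge n (l : seq 'I_n) i s : i \in l -> s i <= peval (qsum l) s.
Proof.
elim: l => //= x l IH; rewrite in_cons => /orP[/eqP->|/IH]; lia.
Qed.

Lemma Sound_poly n (C : cmd n) R : Sound C R ->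
  exists q : polyE n, forall (s s' : store n), exec C s s' ->
    forall j : 'I_n, s' j <= peval q s.
Proof.
move=> [g [hg hs]]; case: hg => hm h0 [c [d hc]].
pose S := qsum (enum 'I_n).
exists (PAdd S (PMul (PConst n (2 * c)) (ppow (PAdd S (PConst n 1)) d))).
move=> s s' ex j; apply: leq_trans (hs _ _ ex j) _.
rewrite /= peval_ppow /= /shp.
set x := peval S s.
have hx : forall P, mx P s <= x by move=> P; apply: mx_le => i _; apply: qsum_ge; rewrite mem_enum.
have h1 := hx (fun i => R i j == 1).
have h2 : g (mx (fun i => R i j == 2) s) <= c * x.+1 ^ d by apply: leq_trans (hc _) _; rewrite leq_mul2l; apply/orP; right; apply: expn_mono; exact: hx.
have h3 : g (mx (fun i => R i j == 3) s) <= c * x.+1 ^ d by apply: leq_trans (hc _) _; rewrite leq_mul2l; apply/orP; right; apply: expn_mono; exact: hx.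
rewrite addn1 -mulnA; move: h1 h2 h3; generalize (c * x.+1 ^ d); lia.
Qed.

Theorem corollary11 (n p : nat) (P : cmd n) (M : mat n p) :
  derivable P M ->
  (exists a : choice p, forall i j : 'I_n, mx_at M a i j <> Minf) ->
  exists q : polyE n, forall (s s' : store n), exec P s s' ->
    forall j : 'I_n, s' j <= peval q s.
Proof.
move=> [ks [hd _ _]] [a ha].
apply: (@Sound_poly n P (rk M a)); apply: (main hd) => i j.
have := ha i j; rewrite /mx_at; case: (M i j a) => //.
Qed.
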